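(* Let $p$ be a prime greater than $3$ and let $u$ be a positive integer coprime to $p$. Let $a_1,a_2,a_3,\alpha_1,\alpha_2,\alpha_3$ be positive integers. Assume that the ternary diagonal $\mathbb{Z}$-lattice $\langle a_1,a_2,a_3\rangle$ is isometric over $\mathbb{Z}_p$ to $\langle 1,-\Delta_p\rangle\perp\langle p\epsilon_p\rangle$ for some $\epsilon_p\in\mathbb{Z}_p^\times$. Then there is an integer $v$ such that (i) $0<v<p^2$; (ii) $uv+a_1\alpha_1^2+a_2\alpha_2^2$ is not represented by $\langle a_1,a_2\rangle$ over $\mathbb{Z}_p$; (iii) $uv+a_1\alpha_1^2+a_2\alpha_2^2+a_3\alpha_3^2$ is represented by $\langle a_1,a_2,a_3\rangle$ over $\mathbb{Z}_p$; (iv) $\max\bigl(\mathrm{ord}_p(uv+a_1\alpha_1^2+a_2\alpha_2^2),\ \mathrm{ord}_p(uv+a_1\alpha_1^2+a_2\alpha_2^2+a_3\alpha_3^2)\bigr)\le 1$.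
   Context: $\Delta_p$ denotes a nonsquare unit of $\mathbb{Z}_p$. $\langle b_1,\dots,b_k\rangle$ denotes the lattice with diagonal Gram matrix with entries $b_1,\dots,b_k$ (quadratic form $b_1x_1^2+\cdots+b_kx_k^2$). An element $n$ is represented by such a lattice over $\mathbb{Z}_p$ if $n=b_1x_1^2+\cdots+b_kx_k^2$ for some $x_i\in\mathbb{Z}_p$. *)

(* Defs.v *)
From HB Require Import structures.
From mathcomp Require Import all_boot all_order all_algebra.
Unset Strict Implicit. Unset Printing Implicit Defensive.
Import Order.TTheory GRing.Theory Num.Theory.
Local Open Scope ring_scope.

(* p-adic integers Z_p modelled as the inverse limit of Z/p^k Z:
   an element of Z_p is a coherent sequence (x k)_k of integers,
   x k being a representative of the residue modulo p^k, with
   x (k+1) = x k mod p^k.  Ring operations are componentwise, so an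
   identity between polynomial expressions in Z_p holds iff it holds
   modulo p^k for every k. *)
Definition coherent (p : nat) (x : nat -> int) : Prop :=
  forall k : nat, (x k.+1 = x k %[mod Posz (p ^ k)%N])%Z.

Definition eqZp (p : nat) (x y : nat -> int) : Prop :=
  forall k : nat, (x k = y k %[mod Posz (p ^ k)%N])%Z.

Definition cstZp (n : int) : nat -> int := fun _ => n.

Definition Zp_unit (p : nat) (x : nat -> int) : Prop :=
  exists y, coherent p y /\ eqZp p (fun k => x k * y k) (cstZp 1).

Definition Zp_square (p : nat) (x : nat -> int) : Prop :=
  exists y, coherent p y /\ eqZp p (fun k => y k ^+ 2) x.

Definition repr_Zp (p : nat) (b : seq int) (n : int) : Prop :=
  exists xs : seq (nat -> int),
    size xs = size b /\
    (forall i, (i < size b)%N -> coherent p (nth (cstZp 0) xs i)) /\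
    eqZp p (cstZp n)
      (fun k => \sum_(i < size b) b`_i * (nth (cstZp 0) xs i k) ^+ 2).

Definition coherentM (p n : nat) (A : nat -> 'M[int]_n) : Prop :=
  forall i j, coherent p (fun k => A k i j).

Definition eqZpM (p n : nat) (A B : nat -> 'M[int]_n) : Prop :=
  forall i j, eqZp p (fun k => A k i j) (fun k => B k i j).

Definition isometric_Zp (p n : nat) (A B : nat -> 'M[int]_n) : Prop :=
  exists T S : nat -> 'M[int]_n,
    [/\ coherentM p n T, coherentM p n S,
        eqZpM p n (fun k => T k *m S k) (fun _ => 1%:M),
        eqZpM p n (fun k => S k *m T k) (fun _ => 1%:M) &
        eqZpM p n (fun k => (T k)^T *m A k *m T k) B].

Definition diagZp (n : nat) (d : 'I_n -> nat -> int) : nat -> 'M[int]_n :=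
  fun k => \matrix_(i, j) (if i == j then d i k else 0).

Definition diag3Zp (d0 d1 d2 : nat -> int) : nat -> 'M[int]_3 :=
  @diagZp 3 (fun i : 'I_3 => nth (cstZp 0) [:: d0; d1; d2] i).

(* ord_p n <= m  (with ord_p 0 = +infinity) *)
Definition ordp_le (p : nat) (n : int) (m : nat) : bool :=
  (n != 0) && (logn p `|n|%N <= m)%N.

(* Main.v *)
Require Import Defs.
From HB Require Import structures.
From mathcomp Require Import all_boot all_order all_algebra.
From mathcomp Require Import ring zify.
From Stdlib Require Import ClassicalEpsilon.
Import Order.TTheory GRing.Theory Num.Theory.
Local Open Scope ring_scope.
Lemma FpN (p:nat) (pp : prime p) (x : 'F_p) : ((x : nat)%:Z%:~R : 'F_p) = x.
Proof. rewrite -pmulrn. exact: natr_Zp. Qed.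
Lemma FpE (p : nat) (pp : prime p) (x : int) : ((x%:~R : 'F_p) == 0) = (p%:Z %| x)%Z.
Proof. by rewrite (dvdz_pcharf (pchar_Fp pp)). Qed.
Lemma Fp_pexp (p k : nat) (pp : prime p) : (0 < k)%N -> (((p ^ k)%N%:Z)%:~R : 'F_p) = 0.
Proof. move=> k0; apply/eqP; rewrite FpE // dvdzE /=. by rewrite dvdn_exp. Qed.
Lemma Fp2 (p : nat) (pp : prime p) : p != 2%N -> (2 : 'F_p) != 0.
Proof.
move=> p2; have := @FpE p pp 2; rewrite /= => ->; rewrite dvdzE /=.
by rewrite dvdn_prime2 //. 
Qed.

Lemma lift_step (p : nat) (pp : prime p) (p2 : p != 2%N) (b c y : int) (k : nat) :
  (0 < k)%N -> (y%:~R : 'F_p) != 0 -> (b%:~R : 'F_p) != 0 ->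
  ((p ^ k)%N%:Z %| b * y ^+ 2 - c)%Z ->
  exists y' : int, ((p ^ k)%N%:Z %| y' - y)%Z /\ ((p ^ k.+1)%N%:Z %| b * y' ^+ 2 - c)%Z.
Proof.
move=> k0 y0 b0 /dvdzP [q Hq].
set tt : 'F_p := - (q%:~R) / (2 * b%:~R * y%:~R).
set t : int := (tt : nat)%:Z.
have tE : (t%:~R : 'F_p) = tt by rewrite /t FpN.
exists (y + t * (p ^ k)%N%:Z); split.
  by apply/dvdzP; exists t; rewrite addrC addKr.
have -> : b * (y + t * (p ^ k)%N%:Z) ^+ 2 - c =
   (q + 2 * b * y * t + b * t ^+ 2 * (p ^ k)%N%:Z) * (p ^ k)%N%:Z.
  have -> : c = b * y ^+ 2 - q * (p ^ k)%N%:Z by rewrite -Hq; ring.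
  ring.
rewrite expnSr PoszM mulrC.
apply: dvdz_mul => //.
rewrite -(@FpE p pp) !rmorphD !rmorphM /= Fp_pexp // tE /tt.
have h2 := @Fp2 p pp p2.
rewrite mulr0 addr0; apply/eqP.
have -> : (2%:~R : 'F_p) = 2 by [].
field. by rewrite y0 b0 h2.
Qed.
Lemma modE (d m n : int) : (m = n %[mod d])%Z <-> (d %| m - n)%Z.
Proof. by rewrite -eqz_mod_dvd; split => [->|/eqP]. Qed.

Definition hnext (p : nat) (b c : int) (k : nat) (y : int) : int :=
  epsilon (inhabits 0) (fun y' => ((p ^ k)%N%:Z %| y' - y)%Z /\
                                  ((p ^ k.+1)%N%:Z %| b * y' ^+ 2 - c)%Z).

Lemma hnext_spec (p : nat) (pp : prime p) (p2 : p != 2%N) (b c y : int) (k : nat) :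
  (0 < k)%N -> (y%:~R : 'F_p) != 0 -> (b%:~R : 'F_p) != 0 ->
  ((p ^ k)%N%:Z %| b * y ^+ 2 - c)%Z ->
  ((p ^ k)%N%:Z %| hnext p b c k y - y)%Z /\
  ((p ^ k.+1)%N%:Z %| b * (hnext p b c k y) ^+ 2 - c)%Z.
Proof.
move=> k0 y0 b0 h; rewrite /hnext.
apply (@epsilon_spec _ _ (fun y' : int => ((p ^ k)%N%:Z %| y' - y)%Z /\ ((p ^ k.+1)%N%:Z %| b * y' ^+ 2 - c)%Z)).
exact: (@lift_step p pp p2 b c y k k0 y0 b0 h).
Qed.

Fixpoint hseq (p : nat) (b : int) (c : nat -> int) (y0 : int) (k : nat) : int :=
  match k with
  | 0 => y0
  | k'.+1 => if k' is 0 then y0 else hnext p b (c k'.+1) k' (hseq p b c y0 k')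
  end.

Lemma hensel (p : nat) (pp : prime p) (p2 : p != 2%N) (b : int) (c : nat -> int) (y0 : int) :
  coherent p c -> (y0%:~R : 'F_p) != 0 -> (b%:~R : 'F_p) != 0 ->
  (p%:Z %| b * y0 ^+ 2 - c 1%N)%Z ->
  exists y : nat -> int, coherent p y /\
    forall k, ((p ^ k)%N%:Z %| b * y k ^+ 2 - c k)%Z.
Proof.
move=> cc y00 b0 h1.
have inv : forall k, (0 < k)%N ->
    ((p ^ k)%N%:Z %| b * hseq p b c y0 k ^+ 2 - c k)%Z /\
    (hseq p b c y0 k)%:~R = (y0%:~R : 'F_p).
  elim=> // k IH _.
  case: k IH => [_|k IH]; first by rewrite /= expn1.
  have [IH1 IH2] := IH isT.
  have h' : ((p ^ k.+1)%N%:Z %| b * hseq p b c y0 k.+1 ^+ 2 - c k.+2)%Z.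
    have := cc k.+1; rewrite modE => hc.
    have -> : b * hseq p b c y0 k.+1 ^+ 2 - c k.+2 =
       (b * hseq p b c y0 k.+1 ^+ 2 - c k.+1) - (c k.+2 - c k.+1) by ring.
    by rewrite rpredB.
  have yk : ((hseq p b c y0 k.+1)%:~R : 'F_p) != 0 by rewrite IH2.
  have [s1 s2] := @hnext_spec p pp p2 _ _ _ k.+1 isT yk b0 h'.
  split; first exact: s2.
  rewrite -IH2; apply/eqP; rewrite -subr_eq0 -rmorphB /= FpE //.
  apply: dvdz_trans s1; rewrite dvdzE /= expnS; exact: dvdn_mulr.
exists (hseq p b c y0); split.
  case=> [|k]; first by rewrite expn0 /= modz1.
  rewrite modE.
  have [i1 i2] := inv k.+1 isT.
  have yk : ((hseq p b c y0 k.+1)%:~R : 'F_p) != 0 by rewrite i2.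
  have h' : ((p ^ k.+1)%N%:Z %| b * hseq p b c y0 k.+1 ^+ 2 - c k.+2)%Z.
    have := cc k.+1; rewrite modE => hc.
    have -> : b * hseq p b c y0 k.+1 ^+ 2 - c k.+2 =
       (b * hseq p b c y0 k.+1 ^+ 2 - c k.+1) - (c k.+2 - c k.+1) by ring.
    by rewrite rpredB.
  by have [s1 s2] := @hnext_spec p pp p2 _ _ _ k.+1 isT yk b0 h'.
case=> [|k]; first by rewrite expn0 dvd1z.
by have [] := inv k.+1 isT.
Qed.
Lemma card_Fp_sq (p : nat) (pp : prime p) (p2 : p != 2%N) (b c : 'F_p) :
  b != 0 -> (p < 2 * #|[set (c + b * x ^+ 2)%R | x : 'F_p]|)%N.
Proof.
move=> b0.
pose h (x : 'F_p) := (x == 0) || (val x < val (- x))%N.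
pose phi (x : 'F_p) := ((c + b * x ^+ 2)%R, h x).
have h2 := @Fp2 p pp p2.
have phiI : injective phi.
  move=> x y exy.
  have e1 : c + b * x ^+ 2 = c + b * y ^+ 2 := congr1 fst exy.
  have hxy : h x = h y := congr1 snd exy.
  have e : x ^+ 2 = y ^+ 2 by apply: (mulfI b0); apply: (addrI c).
  have : (x - y) * (x + y) = 0 by rewrite -subr_sqr e subrr.
  move/eqP; rewrite mulf_eq0 subr_eq0 => /orP [/eqP //|].
  rewrite addr_eq0 => /eqP xE.
  case: (eqVneq y 0) => [y0|y0]; first by rewrite xE y0 oppr0.
  have x0 : x != 0 by rewrite xE oppr_eq0.
  move: hxy; rewrite /h xE opprK oppr_eq0 (negbTE y0) /=.
  case: ltngtP => //.
  move=> yE'; have yE : - y = y by apply: val_inj; exact: yE'.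
  exfalso.
  have : 2 * y = 0 by rewrite mulr2n mulrDl mul1r -{1}yE addNr.
  by move/eqP; rewrite mulf_eq0 (negbTE h2) (negbTE y0).
set S := [set (c + b * x ^+ 2)%R | x : 'F_p].
have sub : [set phi x | x : 'F_p] \subset (setX S [set: bool]) :\ (c, false).
  apply/subsetP => z /imsetP [x _ ->]; rewrite !inE /= andbT.
  apply/andP; split; last by apply/imsetP; exists x.
  apply/negP => /eqP ez.
  have e1 : c + b * x ^+ 2 = c := congr1 fst ez.
  have e2 : h x = false := congr1 snd ez.
  have : b * x ^+ 2 == 0 by rewrite -(addrI c (etrans e1 (esym (addr0 c)))).
  rewrite mulf_eq0 (negbTE b0) expf_eq0 /= => x0.
  by rewrite /h x0 in e2.
have := subset_leq_card sub.
rewrite card_imset // card_Fp //.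
have := cardsD1 (c, false) (setX S [set: bool]).
rewrite cardsX cardsT card_bool.
have -> : (c, false) \in setX S [set: bool].
  rewrite !inE andbT; apply/imsetP; exists 0 => //; by rewrite expr0n /= mulr0 addr0.
move=> E le; rewrite mulnC E add1n ltnS; exact: le.
Qed.
Lemma univ_Fp (p : nat) (pp : prime p) (p2 : p != 2%N) (a b c : 'F_p) :
  a != 0 -> b != 0 -> exists x y, a * x ^+ 2 + b * y ^+ 2 = c.
Proof.
move=> a0 b0.
have h1 := @card_Fp_sq p pp p2 a 0 a0.
have nb0 : - b != 0 by rewrite oppr_eq0.
have h2 := @card_Fp_sq p pp p2 (- b) c nb0.
set S1 := [set (0 + a * x ^+ 2)%R | x : 'F_p] in h1.
set S2 := [set (c + - b * x ^+ 2)%R | x : 'F_p] in h2.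
case: (set_0Vmem (S1 :&: S2)) => [e|[z]].
  have := cardsUI S1 S2; rewrite e cards0 addn0 => E.
  have := max_card (S1 :|: S2); rewrite E card_Fp //.
  lia.
rewrite inE => /andP [/imsetP [x _ ->] /imsetP [y _ e]].
exists x, y; rewrite add0r in e; rewrite e; ring.
Qed.
Definition o0 : 'I_3 := @Ordinal 3 0 isT.
Definition o1 : 'I_3 := @Ordinal 3 1 isT.
Definition o2 : 'I_3 := @Ordinal 3 2 isT.
Lemma ordE3 : (ord0 = o0 :> 'I_3) /\ (lift ord0 ord0 = o1 :> 'I_3) /\
   (lift ord0 (lift ord0 ord0) = o2 :> 'I_3).
Proof. by split; [|split]; apply: val_inj. Qed.

Lemma TAT (T : 'M[int]_3) (a0 a1 a2 : int) (k : nat) (i j : 'I_3) :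
  ((T^T *m diag3Zp (cstZp a0) (cstZp a1) (cstZp a2) k *m T) i j) =
  a0 * T o0 i * T o0 j + a1 * T o1 i * T o1 j + a2 * T o2 i * T o2 j.
Proof.
rewrite !mxE !big_ord_recl big_ord0 !mxE !big_ord_recl !big_ord0 /=.
rewrite /diag3Zp /diagZp !mxE /=.
case: ordE3 => [-> [-> ->]]; rewrite /cstZp; ring.
Qed.

Lemma TAT2 (T : 'M[int]_3) (d0 d1 d2 : nat -> int) (k : nat) (i j : 'I_3) :
  ((T^T *m diag3Zp d0 d1 d2 k *m T) i j) =
  d0 k * T o0 i * T o0 j + d1 k * T o1 i * T o1 j + d2 k * T o2 i * T o2 j.
Proof.
rewrite !mxE !big_ord_recl big_ord0 !mxE !big_ord_recl !big_ord0 /=.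
rewrite /diag3Zp /diagZp !mxE /=.
case: ordE3 => [-> [-> ->]]; ring.
Qed.

Lemma diag3E (d0 d1 d2 : nat -> int) (k : nat) :
  [/\ diag3Zp d0 d1 d2 k o0 o0 = d0 k, diag3Zp d0 d1 d2 k o1 o1 = d1 k,
      diag3Zp d0 d1 d2 k o2 o2 = d2 k &
      [/\ diag3Zp d0 d1 d2 k o0 o1 = 0, diag3Zp d0 d1 d2 k o0 o2 = 0 &
          diag3Zp d0 d1 d2 k o1 o2 = 0]].
Proof. by rewrite /diag3Zp /diagZp !mxE. Qed.

Lemma mulE3 (T S : 'M[int]_3) (i j : 'I_3) :
  (T *m S) i j = T i o0 * S o0 j + T i o1 * S o1 j + T i o2 * S o2 j.
Proof.
rewrite !mxE !big_ord_recl big_ord0 /=.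
case: ordE3 => [-> [-> ->]]; ring.
Qed.
Definition nsq {F : nzRingType} (x : F) := forall r : F, r ^+ 2 != x.

Lemma ord3P (j : 'I_3) : [\/ j = o0, j = o1 | j = o2].
Proof.
case: j => [[|[|[|m]]] Hm]; [apply: Or31|apply: Or32|apply: Or33|by []]; exact: val_inj.
Qed.

Lemma struct_F (F : fieldType) (a0 a1 a2 D : F) (t s : 'I_3 -> 'I_3 -> F) :
  (forall i j, t i o0 * s o0 j + t i o1 * s o1 j + t i o2 * s o2 j = (i == j)%:R) ->
  (forall i j, s i o0 * t o0 j + s i o1 * t o1 j + s i o2 * t o2 j = (i == j)%:R) ->
  (forall i j, a0 * t o0 i * t o0 j + a1 * t o1 i * t o1 j + a2 * t o2 i * t o2 j =
     if i == j then (if i == o0 then 1 else if i == o1 then - D else 0) else 0) ->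
  nsq D ->
  [\/ [/\ a2 = 0, a0 != 0, a1 != 0 & nsq (- (a0 * a1))],
      [/\ a0 = 0, a1 != 0, a2 != 0 & nsq (- (a1 * a2))] |
      [/\ a1 = 0, a0 != 0, a2 != 0 & nsq (- (a0 * a2))]].
Proof.
move=> TS ST E nD.
have D0 : D != 0 by move: (nD 0); rewrite expr0n /= eq_sym.
have w0 : forall j, (if j == o0 then a0 * t o0 o2 else if j == o1 then a1 * t o1 o2 else a2 * t o2 o2) = 0.
  move=> j.
  have id : forall j, 
    (a0 * t o0 o0 * t o0 o2 + a1 * t o1 o0 * t o1 o2 + a2 * t o2 o0 * t o2 o2) * s o0 j +
    (a0 * t o0 o1 * t o0 o2 + a1 * t o1 o1 * t o1 o2 + a2 * t o2 o1 * t o2 o2) * s o1 j +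
    (a0 * t o0 o2 * t o0 o2 + a1 * t o1 o2 * t o1 o2 + a2 * t o2 o2 * t o2 o2) * s o2 j =
    a0 * t o0 o2 * (t o0 o0 * s o0 j + t o0 o1 * s o1 j + t o0 o2 * s o2 j) +
    a1 * t o1 o2 * (t o1 o0 * s o0 j + t o1 o1 * s o1 j + t o1 o2 * s o2 j) +
    a2 * t o2 o2 * (t o2 o0 * s o0 j + t o2 o1 * s o1 j + t o2 o2 * s o2 j).
    move=> j'; ring.
  have := id j; rewrite !E !TS /= !mul0r !add0r.
  by case: (ord3P j) => -> /=; rewrite ?mulr1 ?mulr0 ?addr0 ?add0r => <-.
have wa := w0 o0; have wb := w0 o1; have wc := w0 o2; rewrite /= in wa wb wc.
have minor : - D = a0 * a1 * (t o0 o0 * t o1 o1 - t o0 o1 * t o1 o0) ^+ 2 +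
   a0 * a2 * (t o0 o0 * t o2 o1 - t o0 o1 * t o2 o0) ^+ 2 +
   a1 * a2 * (t o1 o0 * t o2 o1 - t o1 o1 * t o2 o0) ^+ 2.
  have := E o0 o0; have := E o1 o1; have := E o0 o1; rewrite /= => e01 e11 e00.
  have -> : - D = 1 * (- D) - 0 ^+ 2 by ring.
  rewrite -e01 -e11 -e00; ring.
have aux : forall x y m : F, - D = x * y * m ^+ 2 -> [/\ x != 0, y != 0 & nsq (- (x * y))].
  move=> x y m e; split.
  - by apply: contraNneq D0 => x0; rewrite -[D]opprK e x0 !mul0r oppr0.
  - by apply: contraNneq D0 => y0; rewrite -[D]opprK e y0 mulr0 !mul0r oppr0.
  - move=> r; apply/eqP => er; have := nD (r * m); rewrite exprMn er.
    by rewrite -[D]opprK e mulNr eqxx.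
have st := ST o2 o2; rewrite /= in st.
case: (eqVneq (t o0 o2) 0) => [h0|h0].
  case: (eqVneq (t o1 o2) 0) => [h1|h1].
    case: (eqVneq (t o2 o2) 0) => [h2|h2].
      by move: st; rewrite h0 h1 h2 !mulr0 !addr0 => /eqP; rewrite eq_sym oner_eq0.
    have a20 : a2 = 0 by move/eqP: wc; rewrite mulf_eq0 (negbTE h2) orbF => /eqP.
    apply: Or31; move: minor; rewrite a20 ?mulr0 ?mul0r ?addr0 ?add0r => /aux [] *; by split.
  have a10 : a1 = 0 by move/eqP: wb; rewrite mulf_eq0 (negbTE h1) orbF => /eqP.
  apply: Or33; move: minor; rewrite a10 ?mulr0 ?mul0r ?addr0 ?add0r => /aux [] *; by split.
have a00 : a0 = 0 by move/eqP: wa; rewrite mulf_eq0 (negbTE h0) orbF => /eqP.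
apply: Or32; move: minor; rewrite a00 ?mulr0 ?mul0r ?addr0 ?add0r => /aux [] *; by split.
Qed.
Lemma aniso (F : fieldType) (a b x y : F) : a != 0 -> nsq (- (a * b)) ->
  a * x ^+ 2 + b * y ^+ 2 = 0 -> x = 0 /\ y = 0.
Proof.
move=> a0 nab e.
have y0 : y = 0.
  apply/eqP; apply/negPn/negP => y0.
  have := nab (a * x / y); apply/negP; rewrite negbK; apply/eqP.
  have bE : b = - (a * x ^+ 2) / y ^+ 2.
    rewrite -[b](mulfK (expf_neq0 2 y0)); congr (_ / _).
    by apply/eqP; rewrite -addr_eq0 addrC e.
  rewrite bE; field; exact: y0.
split=> //; move: e; rewrite y0 expr0n /= mulr0 addr0 => /eqP.
by rewrite mulf_eq0 (negbTE a0) expf_eq0 /= => /eqP.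
Qed.

Lemma FpD (p : nat) (pp : prime p) (k : nat) (x y : int) : (0 < k)%N ->
  ((p ^ k)%N%:Z %| x - y)%Z -> (x%:~R : 'F_p) = y%:~R.
Proof.
move=> k0 h; apply/eqP; rewrite -subr_eq0 -rmorphB /= FpE //.
apply: dvdz_trans h; rewrite dvdzE /=; exact: dvdn_exp.
Qed.

Lemma Fp_unit (p : nat) (pp : prime p) (x : nat -> int) (k : nat) : (0 < k)%N ->
  Zp_unit p x -> (x k)%:~R != 0 :> 'F_p.
Proof.
move=> k0 [y [_ h]]; have := h k; rewrite /cstZp modE => /(@FpD p pp k _ _ k0).
rewrite rmorphM /= rmorph1 => e; apply/negP => /eqP x0.
by move: e; rewrite x0 mul0r => /eqP; rewrite eq_sym oner_eq0.
Qed.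

Lemma nsqD (p : nat) (pp : prime p) (p2 : p != 2%N) (D : nat -> int) :
  coherent p D -> Zp_unit p D -> ~ Zp_square p D -> nsq ((D 1%N)%:~R : 'F_p).
Proof.
move=> cD uD nsD r; apply/negP => /eqP e.
have r0 : r != 0.
  apply/negP => /eqP r0; have := @Fp_unit p pp D 1 isT uD.
  by rewrite -e r0 expr0n.
have y00 : (((r : nat)%:Z)%:~R : 'F_p) != 0 by rewrite FpN.
have h1 : (p%:Z %| 1 * ((r : nat)%:Z) ^+ 2 - D 1%N)%Z.
  have hr : (((r : nat)%:Z)%:~R : 'F_p) = r := @FpN p pp r.
  rewrite -FpE // rmorphB /= rmorphM /= rmorphXn /= hr mulr1z mul1r.
  by rewrite subr_eq0; apply/eqP.
have [y [cy hy]] := @hensel p pp p2 1 D _ cD y00 (oner_neq0 _) h1.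
apply: nsD; exists y; split=> // k; rewrite modE.
by have := hy k; rewrite mul1r.
Qed.

Lemma ordp_p2 (p : nat) (pp : prime p) (n : int) :
  ~ ((p ^ 2)%N%:Z %| n)%Z -> ordp_le p n 1.
Proof.
move=> h; rewrite /ordp_le; apply/andP; split.
  by apply/negP => /eqP n0; apply: h; rewrite n0 dvdz0.
rewrite leqNgt; apply/negP => lt; apply: h.
rewrite dvdzE /=.
have n0 : (0 < `|n|)%N.
  rewrite lt0n; apply/negP => /eqP n0.
  by move: lt; rewrite n0 logn0.
rewrite pfactor_dvdn //.
Qed.

Lemma ordp_Fp (p : nat) (pp : prime p) (n : int) :
  (n%:~R : 'F_p) != 0 -> ordp_le p n 1.
Proof.
move=> h; apply: ordp_p2 => // d; move: h; rewrite FpE //; apply/negP/negPn.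
apply: dvdz_trans d; rewrite dvdzE /=; exact: dvdn_exp.
Qed.
Definition good (p : nat) (u a1 a2 a3 al1 al2 al3 v : int) : Prop :=
  let n2 := u * v + a1 * al1 ^+ 2 + a2 * al2 ^+ 2 in
  let n3 := n2 + a3 * al3 ^+ 2 in
  [/\ 0 < v < (p ^ 2)%N%:Z,
      forall x y : int, ~ ((p ^ 2)%N%:Z %| n2 - (a1 * x ^+ 2 + a2 * y ^+ 2))%Z,
      exists y1 y2 y3 : nat -> int, [/\ coherent p y1, coherent p y2, coherent p y3 &
          forall k, ((p ^ k)%N%:Z %| n3 - (a1 * y1 k ^+ 2 + a2 * y2 k ^+ 2 + a3 * y3 k ^+ 2))%Z] &
      ordp_le p n2 1 && ordp_le p n3 1].

Lemma good_swap (p : nat) (u a1 a2 a3 al1 al2 al3 v : int) :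
  good p u a1 a2 a3 al1 al2 al3 v -> good p u a2 a1 a3 al2 al1 al3 v.
Proof.
have E : u * v + a1 * al1 ^+ 2 + a2 * al2 ^+ 2 = u * v + a2 * al2 ^+ 2 + a1 * al1 ^+ 2 by ring.
rewrite /good E => -[h1 h2 [y1 [y2 [y3 [c1 c2 c3 h3]]]] h4]; split => //.
  by move=> x y; rewrite (addrC (a2 * _)); apply: h2.
exists y2, y1, y3; split => // k; rewrite (addrC (a2 * _)); exact: h3.
Qed.

Lemma good_main (p u a1 a2 a3 al1 al2 al3 : nat) (v : int) :
  good p u%:Z a1%:Z a2%:Z a3%:Z al1%:Z al2%:Z al3%:Z v ->
    let n2 := u%:Z * v + a1%:Z * (al1%:Z) ^+ 2 + a2%:Z * (al2%:Z) ^+ 2 in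
    let n3 := n2 + a3%:Z * (al3%:Z) ^+ 2 in
    [/\ 0 < v < (p ^ 2)%N%:Z,
        ~ repr_Zp p [:: a1%:Z; a2%:Z] n2,
        repr_Zp p [:: a1%:Z; a2%:Z; a3%:Z] n3 &
        ordp_le p n2 1 && ordp_le p n3 1].
Proof.
move=> [h1 h2 [y1 [y2 [y3 [c1 c2 c3 h3]]]] h4] n2 n3; split => //.
  move=> [xs [sz [_ hx]]].
  case: xs sz hx => [|e1 [|e2 [|]]] //= _ hx.
  apply: (h2 (e1 2%N) (e2 2%N)).
  have := hx 2%N; rewrite modE /cstZp !big_ord_recl big_ord0 /=.
  by rewrite addr0.
exists [:: y1; y2; y3]; split; first by [].
split; first by case=> [|[|[|]]].
move=> k; rewrite modE /cstZp !big_ord_recl big_ord0 /= addr0 addrA.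
exact: h3.
Qed.
Lemma coh_cst (p : nat) (x : int) : coherent p (cstZp x).
Proof. by move=> k. Qed.

Lemma Fp3 (p : nat) (pp : prime p) : (3 < p)%N -> (3 : 'F_p) != 0.
Proof.
move=> p3; have := @FpE p pp 3; rewrite /= => E.
have -> : (3 : 'F_p) = (3 : int)%:~R by [].
rewrite E dvdzE /=; apply/negP => /dvdn_leq; lia.
Qed.

Lemma p_lt_p2 (p : nat) : (1 < p)%N -> (p < p ^ 2)%N.
Proof. move=> h; rewrite expnS expn1 -{1}[p]muln1 ltn_pmul2l //; lia. Qed.

Lemma dvd_rearr (d A B C : int) : (d %| B - (A - C))%Z -> (d %| A - (B + C))%Z.
Proof. move=> h; have -> : A - (B + C) = - (B - (A - C)) by ring.
by rewrite rpredN. Qed.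

Lemma caseB (p : nat) (pp : prime p) (p3 : (3 < p)%N) (u a1 a2 a3 al1 al2 al3 : int) (N : 'F_p) :
  (u%:~R : 'F_p) != 0 -> (a1%:~R : 'F_p) = 0 -> (a2%:~R : 'F_p) != 0 -> (a3%:~R : 'F_p) != 0 ->
  nsq (- ((a2%:~R : 'F_p) * a3%:~R)) -> nsq N ->
  exists v, good p u a1 a2 a3 al1 al2 al3 v.
Proof.
move=> u0 a10 a20 a30 n23 nN.
have p2 : p != 2%N by apply/eqP => e; rewrite e in p3.
have h2 := @Fp2 p pp p2; have h3 := @Fp3 p pp p3.
have N0 : N != 0 by move: (nN 0); rewrite expr0n /= eq_sym.
have n4N : nsq (4 * N).
  move=> r; apply/negP => /eqP e; have := nN (r / 2); rewrite expr_div_n e.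
  have -> : (2 : 'F_p) ^+ 2 = 4 by rewrite expr2 -natrM.
  have h4 : (4 : 'F_p) != 0 by rewrite (_ : 4 = 2 * 2) ?mulf_neq0 // -natrM.
  by rewrite [4 * N]mulrC mulfK // eqxx.
set g3 : 'F_p := a3%:~R * al3%:~R ^+ 2.
pose nu : 'F_p := if a2%:~R * N + g3 == 0 then 4 * N else N.
have nnu : nsq nu by rewrite /nu; case: ifP.
have tg : a2%:~R * nu + g3 != 0.
  rewrite /nu; case: ifP => [/eqP e|/negbT //].
  have -> : a2%:~R * (4 * N) + g3 = 3 * (a2%:~R * N) + (a2%:~R * N + g3) by ring.
  by rewrite e addr0 !mulf_neq0.
set tau : 'F_p := a2%:~R * nu.
set g : 'F_p := a1%:~R * al1%:~R ^+ 2 + a2%:~R * al2%:~R ^+ 2.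
set vv : 'F_p := (tau - g) / u%:~R.
pose v : int := if vv == 0 then p%:Z else (vv : nat)%:Z.
have hv : (v%:~R : 'F_p) = vv.
  rewrite /v; case: ifP => [/eqP ->|_]; last exact: FpN.
  by rewrite -[_%:~R]pmulrn pchar_Fp_0.
have vlt : ((vv : nat) < p)%N by rewrite -{2}(Fp_cast pp); exact: ltn_ord.
have hn2 : ((u * v + a1 * al1 ^+ 2 + a2 * al2 ^+ 2)%:~R : 'F_p) = tau.
  rewrite !rmorphD !rmorphM /= hv /vv /g; field; exact: u0.
have hn3 : ((u * v + a1 * al1 ^+ 2 + a2 * al2 ^+ 2 + a3 * al3 ^+ 2)%:~R : 'F_p) = tau + g3.
  by rewrite rmorphD /= hn2 rmorphM /= rmorphXn.
apply: (@ex_intro _ _ v); rewrite /good; split.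
- apply/andP; split; rewrite /v; case: ifP => h.
  + by rewrite ltz_nat prime_gt0.
  + rewrite ltz_nat lt0n; apply/negP => /eqP e; move/negbT: h; apply/negP; rewrite negbK.
    by apply/eqP; apply: val_inj; exact: e.
  + by rewrite ltz_nat; apply: p_lt_p2; exact: prime_gt1.
  + by rewrite ltz_nat; apply: (leq_trans vlt); apply: ltnW; apply: p_lt_p2; exact: prime_gt1.
- move=> x y /(@FpD p pp 2 _ _ isT); rewrite hn2 !rmorphD !rmorphM /= a10 mul0r add0r.
  rewrite /tau => /(mulfI a20) e; by have := nnu (y%:~R); rewrite e expr2 eqxx.
- have [X [Y e]] := @univ_Fp p pp p2 _ _ (tau + g3) a20 a30.
  case: (eqVneq X 0) => [X0|X0].
  + have Y0 : Y != 0.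
      apply/negP => /eqP Y0; move: tg; rewrite -/tau -e X0 Y0 expr0n /= !mulr0 addr0.
      by rewrite eqxx.
    have hY : (((Y : nat)%:Z)%:~R : 'F_p) = Y := @FpN p pp Y.
    have hh : (p%:Z %| a3 * ((Y : nat)%:Z) ^+ 2 - cstZp (u * v + a1 * al1 ^+ 2 + a2 * al2 ^+ 2 + a3 * al3 ^+ 2) 1%N)%Z.
      rewrite -FpE // rmorphB /= rmorphM /= rmorphXn /= hY /cstZp hn3 -e X0 expr0n /= mulr0 add0r.
      by rewrite subrr.
    have yY : (((Y : nat)%:Z)%:~R : 'F_p) != 0 by rewrite hY.
    have [y [cy hy]] := @hensel p pp p2 _ _ _ (coh_cst p _) yY a30 hh.
    exists (cstZp 0), (cstZp 0), y; split; [exact: coh_cst|exact: coh_cst|exact: cy|].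
    move=> k; have := hy k; rewrite /cstZp expr0n /= !mulr0 !add0r => hk.
    by rewrite -opprB rpredN.
  + have hY : (((Y : nat)%:Z)%:~R : 'F_p) = Y := @FpN p pp Y.
    have hX : (((X : nat)%:Z)%:~R : 'F_p) = X := @FpN p pp X.
    have hh : (p%:Z %| a2 * ((X : nat)%:Z) ^+ 2 - cstZp (u * v + a1 * al1 ^+ 2 + a2 * al2 ^+ 2 + a3 * al3 ^+ 2 - a3 * ((Y : nat)%:Z) ^+ 2) 1%N)%Z.
      rewrite -FpE // rmorphB /= rmorphM /= rmorphXn /= hX /cstZp rmorphB /= hn3 -e.
      by rewrite rmorphM /= rmorphXn /= hY addrK subrr.
    have xX : (((X : nat)%:Z)%:~R : 'F_p) != 0 by rewrite hX.
    have [y [cy hy]] := @hensel p pp p2 _ _ _ (coh_cst p _) xX a20 hh.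
    exists (cstZp 0), y, (cstZp ((Y : nat)%:Z)); split; [exact: coh_cst|exact: cy|exact: coh_cst|].
    move=> k; have := hy k; rewrite /cstZp expr0n /= !mulr0 !add0r => hk.
    exact: dvd_rearr.
- have nu0 : nu != 0 by move: (nnu 0); rewrite expr0n /= eq_sym.
  apply/andP; split; apply: ordp_Fp => //; [rewrite hn2 | rewrite hn3] => //.
  by rewrite /tau mulf_neq0.
Qed.
Lemma P2 (p : nat) : (p ^ 2)%N%:Z = p%:Z * p%:Z.
Proof. by rewrite expnS expn1 PoszM. Qed.

Lemma key_p2 (p : nat) (pp : prime p) (m : int) :
  (m%:~R : 'F_p) != 0 -> ~ ((p ^ 2)%N%:Z %| p%:Z * m)%Z.
Proof.
move=> m0; rewrite P2 dvdz_mul2l; last by rewrite eqz_nat -lt0n prime_gt0.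
by move=> h; move: m0; rewrite FpE // h.
Qed.

Lemma sq_p2 (p : nat) (pp : prime p) (b x : int) :
  (x%:~R : 'F_p) = 0 -> ((p ^ 2)%N%:Z %| b * x ^+ 2)%Z.
Proof.
move/eqP; rewrite FpE // => /dvdzP [q ->].
by rewrite P2; apply/dvdzP; exists (b * q ^+ 2); ring.
Qed.

Lemma caseA (p : nat) (pp : prime p) (p3 : (3 < p)%N) (u a1 a2 a3 al1 al2 al3 a3' : int) :
  (u%:~R : 'F_p) != 0 -> (a1%:~R : 'F_p) != 0 -> (a2%:~R : 'F_p) != 0 ->
  nsq (- ((a1%:~R : 'F_p) * a2%:~R)) -> a3 = p%:Z * a3' -> (a3'%:~R : 'F_p) != 0 ->
  exists v, good p u a1 a2 a3 al1 al2 al3 v.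
Proof.
move=> u0 a10 a20 n12 a3E a30.
have p2 : p != 2%N by apply/eqP => e; rewrite e in p3.
have h2 := @Fp2 p pp p2; have h3 := @Fp3 p pp p3.
have pF : (p%:Z%:~R : 'F_p) = 0 by rewrite -[_%:~R]pmulrn pchar_Fp_0.
have a3F : (a3%:~R : 'F_p) = 0 by rewrite a3E rmorphM /= pF mul0r.
pose c0 : int := if (al3%:~R : 'F_p) ^+ 2 == 1 then 2 else 1.
have [c00 X0] : (c0%:~R : 'F_p) != 0 /\ ((c0 ^+ 2 - al3 ^+ 2)%:~R : 'F_p) != 0.
  rewrite /c0; case: ifP => [/eqP e|/negbT e].
    split; first exact: h2.
    rewrite rmorphB /= !rmorphXn /= e.
    have -> : ((2 : int)%:~R : 'F_p) = 2 by [].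
    by have -> : (2 : 'F_p) ^+ 2 - 1 = 3 by ring.
  split; first by rewrite rmorph1 oner_neq0.
  by rewrite rmorphB /= !rmorphXn /= rmorph1 expr1n subr_eq0 eq_sym.
set X := c0 ^+ 2 - al3 ^+ 2.
set g := a1 * al1 ^+ 2 + a2 * al2 ^+ 2.
set R := a3 * X - g.
set w0 : int := (((u%:~R : 'F_p)^-1 : 'F_p) : nat)%:Z.
have hw0 : (p%:Z %| u * w0 - 1)%Z.
  have hi : (w0%:~R : 'F_p) = (u%:~R)^-1 := @FpN p pp _.
  rewrite -FpE // rmorphB rmorphM /= hi mulfV //.
  by rewrite subr_eq0.
set w := w0 * (2 - u * w0).
have hw : ((p ^ 2)%N%:Z %| u * w - 1)%Z.
  have -> : u * w - 1 = - ((u * w0 - 1) * (u * w0 - 1)) by rewrite /w; ring.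
  by rewrite rpredN P2 dvdz_mul.
have p20 : (p ^ 2)%N%:Z != 0 by rewrite eqz_nat expn_eq0 negb_and -lt0n prime_gt0.
set v := ((R * w) %% (p ^ 2)%N%:Z)%Z.
have uvR : ((p ^ 2)%N%:Z %| u * v - R)%Z.
  have -> : u * v - R = u * (v - R * w) + R * (u * w - 1) by ring.
  rewrite rpredD // ?dvdz_mull //.
  have -> : v - R * w = - (((R * w) %/ (p ^ 2)%N%:Z)%Z * (p ^ 2)%N%:Z).
    rewrite /v {2}(divz_eq (R * w) (p ^ 2)%N%:Z); ring.
  by rewrite rpredN dvdz_mull.
have [z zE] := dvdzP uvR.
have n2E : u * v + a1 * al1 ^+ 2 + a2 * al2 ^+ 2 = p%:Z * (z * p%:Z + a3' * X).
  have -> : u * v = z * (p ^ 2)%N%:Z + R by rewrite -zE; ring.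
  by rewrite /R /g a3E P2; ring.
have n3E : u * v + a1 * al1 ^+ 2 + a2 * al2 ^+ 2 + a3 * al3 ^+ 2 =
           p%:Z * (z * p%:Z + a3' * c0 ^+ 2).
  by rewrite n2E a3E /X; ring.
have m2 : ((z * p%:Z + a3' * X)%:~R : 'F_p) != 0.
  by rewrite rmorphD !rmorphM /= pF mulr0 add0r mulf_neq0.
have m3 : ((z * p%:Z + a3' * c0 ^+ 2)%:~R : 'F_p) != 0.
  by rewrite rmorphD !rmorphM /= pF mulr0 add0r !mulf_neq0.
exists v; rewrite /good; split.
- have v0 : v != 0.
    apply/negP => /eqP v0; move: uvR; rewrite v0 mulr0 sub0r rpredN => hR.
    have hR1 : (R%:~R : 'F_p) = 0.
      apply/eqP; rewrite FpE //; apply: dvdz_trans hR; rewrite dvdzE /=.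
      exact: dvdn_exp.
    have gF : (g%:~R : 'F_p) = 0.
      by move: hR1; rewrite /R rmorphB /= rmorphM /= a3F mul0r sub0r => /eqP; rewrite oppr_eq0 => /eqP.
    move: gF; rewrite /g rmorphD !rmorphM /= -!expr2 => /(@aniso _ _ _ _ _ a10 n12) [x0 y0].
    apply: (@key_p2 p pp (a3' * X)); first by rewrite rmorphM mulf_neq0.
    have -> : p%:Z * (a3' * X) = R + g by rewrite /R a3E; ring.
    by rewrite rpredD // rpredD // sq_p2.
  apply/andP; split.
    by rewrite lt_def v0 /= modz_ge0.
  by have := ltz_mod (R * w) p20.
- move=> x y; rewrite n2E => h.
  have : ((a1 * x ^+ 2 + a2 * y ^+ 2)%:~R : 'F_p) = 0.
    have := @FpD p pp 2 _ _ isT h; rewrite rmorphM /= pF mul0r => <-.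
    by [].
  rewrite rmorphD !rmorphM /= -!expr2 => /(@aniso _ _ _ _ _ a10 n12) [x0 y0].
  apply: (@key_p2 p pp _ m2).
  have -> : p%:Z * (z * p%:Z + a3' * X) = (p%:Z * (z * p%:Z + a3' * X) - (a1 * x ^+ 2 + a2 * y ^+ 2)) + (a1 * x ^+ 2 + a2 * y ^+ 2) by ring.
  by rewrite rpredD // rpredD // sq_p2.
- have hh : (p%:Z %| a3' * c0 ^+ 2 - cstZp (z * p%:Z + a3' * c0 ^+ 2) 1%N)%Z.
    rewrite /cstZp; have -> : a3' * c0 ^+ 2 - (z * p%:Z + a3' * c0 ^+ 2) = - (z * p%:Z) by ring.
    by rewrite rpredN dvdz_mull.
  have [y [cy hy]] := @hensel p pp p2 _ _ _ (coh_cst p _) c00 a30 hh.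
  exists (cstZp 0), (cstZp 0), y; split; [exact: coh_cst|exact: coh_cst|exact: cy|].
  move=> k; have := hy k; rewrite /cstZp n3E expr0n /= !mulr0 !add0r a3E => hk.
  have -> : p%:Z * (z * p%:Z + a3' * c0 ^+ 2) - p%:Z * a3' * y k ^+ 2 =
      - (p%:Z * (a3' * y k ^+ 2 - (z * p%:Z + a3' * c0 ^+ 2))) by ring.
  by rewrite rpredN dvdz_mull.
- by rewrite n3E n2E; apply/andP; split; apply: ordp_p2 => //; apply: key_p2.
Qed.
Theorem lemma2p4 (p u a1 a2 a3 al1 al2 al3 : nat) (Delta : nat -> int) :
  prime p -> (3 < p)%N -> (0 < u)%N -> coprime u p ->
  (0 < a1)%N -> (0 < a2)%N -> (0 < a3)%N ->
  (0 < al1)%N -> (0 < al2)%N -> (0 < al3)%N ->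
  coherent p Delta -> Zp_unit p Delta -> ~ Zp_square p Delta ->
  (exists eps : nat -> int,
     [/\ coherent p eps, Zp_unit p eps &
         isometric_Zp p 3
           (diag3Zp (cstZp a1%:Z) (cstZp a2%:Z) (cstZp a3%:Z))
           (diag3Zp (cstZp 1) (fun k => - Delta k)
                    (fun k => p%:Z * eps k))]) ->
  exists v : int,
    let n2 := u%:Z * v + a1%:Z * (al1%:Z) ^+ 2 + a2%:Z * (al2%:Z) ^+ 2 in
    let n3 := n2 + a3%:Z * (al3%:Z) ^+ 2 in
    [/\ 0 < v < (p ^ 2)%N%:Z,
        ~ repr_Zp p [:: a1%:Z; a2%:Z] n2,
        repr_Zp p [:: a1%:Z; a2%:Z; a3%:Z] n3 &
        ordp_le p n2 1 && ordp_le p n3 1].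
Proof.
move=> pp p3 _ cu _ _ _ _ _ _ cD uD nsD [eps [ce ue [T [S [cT cS TS ST iso]]]]].
have p2 : p != 2%N by apply/eqP => e; rewrite e in p3.
have nN := @nsqD p pp p2 Delta cD uD nsD.
have D21 : ((Delta 2%N)%:~R : 'F_p) = (Delta 1%N)%:~R.
  by apply: (@FpD p pp 1) => //; rewrite -modE; exact: cD 1%N.
have u0 : ((u%:Z)%:~R : 'F_p) != 0.
  rewrite FpE // dvdzE /=; rewrite -prime_coprime // coprime_sym; exact: cu.
pose t i j := ((T 2%N i j)%:~R : 'F_p).
pose s i j := ((S 2%N i j)%:~R : 'F_p).
have TSF : forall i j, t i o0 * s o0 j + t i o1 * s o1 j + t i o2 * s o2 j = (i == j)%:R.
  move=> i j; have := TS i j 2%N; rewrite modE => /(@FpD p pp 2 _ _ isT).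
  rewrite mulE3 !rmorphD !rmorphM /= mxE => ->.
  by case: (i == j); rewrite /= ?mulr1n ?mulr0n.
have STF : forall i j, s i o0 * t o0 j + s i o1 * t o1 j + s i o2 * t o2 j = (i == j)%:R.
  move=> i j; have := ST i j 2%N; rewrite modE => /(@FpD p pp 2 _ _ isT).
  rewrite mulE3 !rmorphD !rmorphM /= mxE => ->.
  by case: (i == j); rewrite /= ?mulr1n ?mulr0n.
have EF : forall i j, ((a1%:Z)%:~R : 'F_p) * t o0 i * t o0 j + (a2%:Z)%:~R * t o1 i * t o1 j +
     (a3%:Z)%:~R * t o2 i * t o2 j =
     if i == j then (if i == o0 then 1 else if i == o1 then - (Delta 1%N)%:~R else 0) else 0.
  move=> i j; have := iso i j 2%N; rewrite modE => /(@FpD p pp 2 _ _ isT).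
  rewrite TAT !rmorphD !rmorphM /= => ->.
  rewrite /diag3Zp /diagZp mxE.
  case: (ord3P i) => ->; case: (ord3P j) => -> //=.
  - by rewrite rmorphN; congr (- _); exact: D21.
  - by rewrite rmorphM /= (_ : (p%:Z%:~R : 'F_p) = 0) ?mul0r // -[_%:~R]pmulrn pchar_Fp_0.
have := @struct_F _ _ _ _ _ t s TSF STF EF nN.
case.
- move=> [a3F a1F a2F n12].
  have /dvdzP [q qE] : (p%:Z %| a3%:Z)%Z by rewrite -FpE //; apply/eqP.
  have q0 : (q%:~R : 'F_p) != 0.
    apply/negP => /eqP q0.
    have e2 := EF o2 o2; rewrite /= a3F !mul0r addr0 -!mulrA -!expr2 in e2.
    have [x0 y0] := @aniso _ _ _ _ _ a1F n12 e2.
    have := iso o2 o2 2%N; rewrite modE TAT /diag3Zp /diagZp mxE /= => h.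
    have hs : ((p ^ 2)%N%:Z %| a1%:Z * T 2%N o0 o2 * T 2%N o0 o2 + a2%:Z * T 2%N o1 o2 * T 2%N o1 o2 +
               a3%:Z * T 2%N o2 o2 * T 2%N o2 o2)%Z.
      have s1 := @sq_p2 p pp a1%:Z _ x0; have s2 := @sq_p2 p pp a2%:Z _ y0.
      have s3 : ((p ^ 2)%N%:Z %| a3%:Z * T 2%N o2 o2 ^+ 2)%Z.
        move/eqP: q0; rewrite FpE // => /dvdzP [r rE].
        by rewrite qE rE P2; apply/dvdzP; exists (r * T 2%N o2 o2 ^+ 2); ring.
      by rewrite -!mulrA -!expr2 !rpredD.
    apply: (@key_p2 p pp (eps 2%N)); first exact: (@Fp_unit p pp eps 2 isT ue).
    set A := a1%:Z * _ * _ + _ + _ in hs h.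
    have -> : p%:Z * eps 2%N = A - (A - p%:Z * eps 2%N) by ring.
    by rewrite rpredB.
  have a3E : a3%:Z = p%:Z * q by rewrite qE mulrC.
  have [v hv] := @caseA p pp p3 u a1 a2 a3 al1 al2 al3 q u0 a1F a2F n12 a3E q0.
  by exists v; apply: good_main.
- move=> [a1F a2F a3F n23].
  have [v hv] := @caseB p pp p3 u a1 a2 a3 al1 al2 al3 _ u0 a1F a2F a3F n23 nN.
  by exists v; apply: good_main.
- move=> [a2F a1F a3F n13].
  have [v hv] := @caseB p pp p3 u a2 a1 a3 al2 al1 al3 _ u0 a2F a1F a3F n13 nN.
  by exists v; apply: good_main; apply: good_swap.
Qed.
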